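(* Let $k,\ell,m$ be integers with $k>\ell\ge1$ and $m\ge1$, and let $w=a^kba^\ell b^m$. For $n\ge1$ let $S_n = a^kba^\ell a^{k}b a^{\ell}b^{m} (a^k b^{m+1}a^\ell)^n a^{k}b a^{\ell}b^{m} b^m$. Then every $S_n$ belongs to $L^{\epsilon}_{\vdash_{\{w\}}}$ and for all $1\le i<j$, $S_i\not\vdash^*_{\{w\}} S_j$; in particular $\vdash^*_{\{w\}}$ is not a well quasi-order on $L^{\epsilon}_{\vdash_{\{w\}}}$.
   Context: For words $u,v$, the shuffle $u \sqcup\!\sqcup v$ is the set of all words $u_1v_1\cdots u_kv_k$ with $k\ge 1$, $u=u_1\cdots u_k$, $v=v_1\cdots v_k$ (pieces possibly empty). For a finite set $I$ of words, $v \vdash_I w$ means $w \in v \sqcup\!\sqcup u$ for some $u\in I$; $\vdash_I^*$ is its reflexive-transitive closure and $L^{\epsilon}_{\vdash_I}=\{w : \epsilon \vdash_I^* w\}$. A quasi-order $\le$ on $S$ is a well quasi-order iff every infinite sequence $s_1,s_2,\dots$ in $S$ has $i<j$ with $s_i\le s_j$. *)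

(* Defs.v *)
From mathcomp Require Import all_boot.
Set Implicit Arguments. Unset Strict Implicit. Unset Printing Implicit Defensive.

Definition word := seq bool.
Definition la : bool := false.
Definition lb : bool := true.

Definition pw (x : bool) (n : nat) : word := nseq n x.

Definition shuffle (u v w : word) : Prop :=
  exists (us vs : seq word),
    [/\ 1 <= size us, size us = size vs,
        flatten us = u, flatten vs = v &
        w = flatten [seq p.1 ++ p.2 | p <- zip us vs]].

Definition step (I : word -> Prop) (v w : word) : Prop :=
  exists u, I u /\ shuffle v u w.

Inductive rtc (R : word -> word -> Prop) : word -> word -> Prop :=
| rtc_refl x : rtc R x x
| rtc_step x y z : R x y -> rtc R y z -> rtc R x z.

Definition derives (I : word -> Prop) := rtc (step I).

Definition Leps (I : word -> Prop) (w : word) : Prop := derives I [::] w.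

Definition wqo_on (S : word -> Prop) (le : word -> word -> Prop) : Prop :=
  forall s : nat -> word, (forall n, S (s n)) ->
    exists i j, i < j /\ le (s i) (s j).

(* Main.v *)
Require Import Defs.
From mathcomp Require Import all_boot.
From mathcomp Require Import zify.
Set Implicit Arguments. Unset Strict Implicit. Unset Printing Implicit Defensive.

Inductive il : word -> word -> word -> Prop :=
| il_nil : il [::] [::] [::]
| il_l a x y z : il x y z -> il (a :: x) y (a :: z)
| il_r a x y z : il x y z -> il x (a :: y) (a :: z).

Lemma il_catl x1 x y z : il x y z -> il (x1 ++ x) y (x1 ++ z).
Proof. by elim: x1 => //= a x1 IH H; apply: il_l; apply: IH. Qed.

Lemma il_catr y1 x y z : il x y z -> il x (y1 ++ y) (y1 ++ z).
Proof. by elim: y1 => //= a y1 IH H; apply: il_r; apply: IH. Qed.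

Lemma shuffle_il u v z : shuffle u v z -> il u v z.
Proof.
case=> us [vs] [_ hs hu hv hz]. subst u v z.
elim: us vs hs => [|u0 us IH] [|v0 vs] //=; first by move=> _; exact: il_nil.
move=> /eqP; rewrite eqSS => /eqP hs.
rewrite -catA. apply: il_catl. apply: il_catr. exact: IH.
Qed.

Definition projl (x : nat) (zl : seq (bool * nat)) : word :=
  [seq p.1 | p <- zl & p.2 == x].

Definition Lab (z : word) (zl : seq (bool * nat)) (ws : seq word) :=
  [/\ map fst zl = z, all (fun p => p.2 < size ws) zl &
      forall x, projl x zl = nth [::] ws x].

Lemma projl_cons x p zl : projl x (p :: zl) =
  if p.2 == x then p.1 :: projl x zl else projl x zl.
Proof. by rewrite /projl /=; case: ifP. Qed.

Lemma il_lab v y z : il v y z -> forall zl n, map fst zl = v ->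
  all (fun p => p.2 < n) zl ->
  exists zl2, [/\ map fst zl2 = z, all (fun p => p.2 <= n) zl2,
     forall x, x != n -> projl x zl2 = projl x zl & projl n zl2 = y].
Proof.
elim=> {v y z}.
- move=> [|p zl] n //= _ _. by exists [::].
- move=> a x y z _ IH [|p zl] n //= [ha hx] /andP [hp hall].
  have [zl2 [h1 h2 h3 h4]] := IH zl n hx hall.
  exists (p :: zl2); split => /=.
  + by rewrite h1 ha.
  + by rewrite h2 andbT ltnW.
  + by move=> x0 hx0; rewrite !projl_cons h3.
  + rewrite !projl_cons h4.
    by have -> : (p.2 == n) = false by apply/eqP => e; rewrite e ltnn in hp.
- move=> a x y z _ IH zl n hx hall.
  have [zl2 [h1 h2 h3 h4]] := IH zl n hx hall.
  exists ((a, n) :: zl2); split => /=.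
  + by rewrite h1.
  + by rewrite leqnn h2.
  + move=> x0 hx0; rewrite projl_cons h3 //.
    by rewrite eq_sym (negbTE hx0).
  + by rewrite projl_cons eqxx h4.
Qed.

Lemma Lab_step v y z zl ws : il v y z -> Lab v zl ws ->
  exists zl2, Lab z zl2 (rcons ws y).
Proof.
move=> hil [h1 h2 h3].
have [zl2 [e1 e2 e3 e4]] := il_lab hil h1 h2.
exists zl2; split => //.
- apply/allP => p hp. rewrite size_rcons ltnS. exact: (allP e2 p hp).
- move=> x. rewrite nth_rcons.
  have [->|hx] := eqVneq x (size ws).
  + by rewrite ltnn ?eqxx e4.
  + rewrite e3 // h3. case: ltnP => // hle.
    by rewrite nth_default.
Qed.

Lemma rtc_snoc R x y z : rtc R x y -> R y z -> rtc R x z.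
Proof.
elim=> [x0 H|x0 y0 z0 H _ IH H2]; first by apply: (rtc_step H); apply: rtc_refl.
exact: (rtc_step H (IH H2)).
Qed.

Lemma derives_lab (w : word) u v : derives (fun u => u = w) u v ->
  forall ws zl, Lab u zl ws -> exists d zl2, Lab v zl2 (ws ++ nseq d w).
Proof.
elim=> [x ws zl H|x y z0 [u0 [-> hsh]] _ IH ws zl H].
- by exists 0, zl; rewrite cats0.
- have [zl2 H2] := Lab_step (shuffle_il hsh) H.
  have [d [zl3 H3]] := IH _ _ H2.
  exists d.+1, zl3. by rewrite -cats1 -catA /= in H3.
Qed.

Lemma projl_cat x zl1 zl2 : projl x (zl1 ++ zl2) = projl x zl1 ++ projl x zl2.
Proof. by rewrite /projl filter_cat map_cat. Qed.

Lemma projl_take x b zl :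
  projl x (take b zl) = take (size (projl x (take b zl))) (projl x zl).
Proof.
by by rewrite -{3}(cat_take_drop b zl) projl_cat take_size_cat.
Qed.

Definition st (zl : seq (bool * nat)) x b := size (projl x (take b zl)).

Lemma st_mono zl x b b' : b <= b' -> st zl x b <= st zl x b'.
Proof.
move=> h; rewrite /st.
have -> : take b zl = take b (take b' zl) by rewrite take_takel.
rewrite (projl_take x b (take b' zl)) size_take. by case: ifP => // /ltnW.
Qed.

Lemma sum_eqmul (a b : nat) (s : seq nat) :
  \sum_(x <- s) ((a == x) * b) = count_mem a s * b.
Proof.
elim: s => [|y s IH]; first by rewrite big_nil.
by rewrite big_cons IH /= eq_sym mulnDl.
Qed.

Lemma count_sum c zl n : all (fun p => p.2 < n) zl ->
  count_mem c (map fst zl) = \sum_(x <- iota 0 n) count_mem c (projl x zl).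
Proof.
elim: zl => [|p zl IH] /=.
  by move=> _; rewrite big1_eq.
move=> /andP [hp hall].
have -> : \sum_(x <- iota 0 n) count_mem c (projl x (p :: zl))
        = \sum_(x <- iota 0 n) ((p.2 == x) * (p.1 == c) + count_mem c (projl x zl)).
  apply: eq_bigr => x _; rewrite projl_cons.
  case: (p.2 == x) => /=; rewrite ?mul1n ?mul0n ?add0n //.
rewrite big_split /= sum_eqmul -IH // count_uniq_mem ?iota_uniq //.
by rewrite mem_iota /= hp mul1n.
Qed.

Lemma Lab_cut z zl ws c b : Lab z zl ws ->
  count_mem c (take b z) =
  \sum_(x <- iota 0 (size ws)) count_mem c (take (st zl x b) (nth [::] ws x)).
Proof.
case=> h1 h2 h3.
rewrite -h1 -map_take (@count_sum c _ (size ws)); last first.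
  apply/allP => p /mem_take hp. exact: (allP h2 p hp).
apply: eq_bigr => x _. by rewrite projl_take h3.
Qed.

Lemma Lab_st zl z ws x b : Lab z zl ws ->
  projl x (take b zl) = take (st zl x b) (nth [::] ws x).
Proof. by case=> _ _ h3; rewrite projl_take h3. Qed.

Lemma st_le zl z ws x b : Lab z zl ws -> st zl x b <= size (nth [::] ws x).
Proof.
move=> H; have := congr1 size (Lab_st x b H).
rewrite size_take /st => ->. case: ifP => // /ltnW //.
Qed.

Lemma count_projl_le c x W : count_mem c (projl x W) <= count_mem c (map fst W).
Proof.
rewrite /projl !count_map count_filter. apply: sub_count => p /andP [] //.
Qed.

Lemma Lab_window z zl ws p q r x c : Lab z zl ws -> z = p ++ q ++ r ->
  count_mem c (projl x (take (size p + size q) zl)) <=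
  count_mem c (projl x (take (size p) zl)) + count_mem c q.
Proof.
case=> h1 _ _ hz.
rewrite takeD projl_cat count_cat leq_add2l.
apply: (leq_trans (count_projl_le _ _ _)).
by rewrite map_take map_drop h1 hz drop_size_cat // take_size_cat.
Qed.

Lemma count_take_cat (c : bool) s (x y : word) :
  count_mem c (take s (x ++ y)) = count_mem c (take s x) + count_mem c (take (s - size x) y).
Proof.
rewrite take_cat; case: ltnP => h.
  have -> : s - size x = 0 by lia.
  by rewrite take0 addn0.
by rewrite count_cat (take_oversize h).
Qed.

Lemma count_take_nseq (c d : bool) s n :
  count_mem c (take s (nseq n d)) = (d == c) * minn s n.
Proof.
elim: n s => [|n IH] [|s] //=; rewrite ?minn0 ?min0n ?muln0 //.
by rewrite IH minnSS mulnS.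
Qed.

Lemma sum_count (T : Type) (P : pred T) (L : seq T) :
  \sum_(s <- L) (P s : nat) = count P L.
Proof. by elim: L => [|x L IH]; rewrite ?big_nil ?big_cons ?IH. Qed.

Lemma sum_eq_le (f g : nat -> nat) (L : seq nat) :
  (forall s, s \in L -> f s <= g s) -> \sum_(s <- L) f s = \sum_(s <- L) g s ->
  forall s, s \in L -> f s = g s.
Proof.
elim: L => [|x L IH] //= H; rewrite !big_cons => E s.
have hx : f x <= g x by apply: H; rewrite inE eqxx.
have hL : \sum_(s <- L) f s <= \sum_(s <- L) g s.
  rewrite big_seq_cond [X in _ <= X]big_seq_cond; apply: leq_sum => i /andP [hi _].
  by apply: H; rewrite inE hi orbT.
have e1 : f x = g x by lia.
have e2 : \sum_(s <- L) f s = \sum_(s <- L) g s by lia.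
rewrite inE => /orP [/eqP ->|hs] //.
apply: IH => //. by move=> i hi; apply: H; rewrite inE hi orbT.
Qed.

Section Params.
Variables k l m : nat.
Hypotheses (hkl : l < k) (hl : 1 <= l) (hm : 1 <= m).

Definition w : word := pw la k ++ [:: lb] ++ pw la l ++ pw lb m.
Definition K := k + l + m + 1.
Definition Aw s := count_mem la (take s w).
Definition Bw s := count_mem lb (take s w).

Lemma size_w : size w = K.
Proof. rewrite /w /K /pw !size_cat !size_nseq /=. lia. Qed.

Lemma Aw_E s : Aw s = minn s k + minn (s - k.+1) l.
Proof.
rewrite /Aw /w /pw; change [:: lb] with (nseq 1 lb).
rewrite !count_take_cat !count_take_nseq ?size_nseq /=; lia.
Qed.

Lemma Bw_E s : Bw s = minn (s - k) 1 + minn (s - k.+1 - l) m.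
Proof.
rewrite /Bw /w /pw; change [:: lb] with (nseq 1 lb).
rewrite !count_take_cat !count_take_nseq ?size_nseq /=; lia.
Qed.


Lemma rigid_arith T F C : T.+1 * m.+1 + 1 <= m.+1 * F + C ->
  (k + l) * F + k * C <= T.+1 * (k + l) + k -> F = T.+1 /\ C = 1.
Proof.
move=> H1 H2.
have hF : T.+1 <= F.
  rewrite leqNgt; apply/negP => hlt.
  have [D hD] : exists D, T.+1 = F + D.+1 by exists (T - F); lia.
  rewrite hD in H1 H2.
  have h1 : D.+1 * m.+1 + 1 <= C by nia.
  have h2 : k * C <= D.+1 * (k + l) + k by nia.
  have h3 : k * (D.+1 * m.+1 + 1) <= D.+1 * (k + l) + k.
    by apply: leq_trans h2; rewrite leq_mul2l h1 orbT.
  nia.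
have hF2 : F = T.+1.
  apply/eqP; rewrite eqn_leq hF andbT; rewrite leqNgt; apply/negP => hlt.
  have : (k + l) * T.+2 <= (k + l) * F by rewrite leq_mul2l hlt orbT.
  nia.
subst F. split => //. nia.
Qed.

Lemma rigid (L : seq nat) T : all (fun s => s <= K) L ->
  \sum_(s <- L) Aw s = T.+1 * (k + l) + k ->
  \sum_(s <- L) Bw s = T.+1 * m.+1 + 1 ->
  [/\ all (fun s => (s == 0) || (s == k.+1) || (s == K)) L,
      count_mem K L = T.+1 & count_mem k.+1 L = 1].
Proof.
move=> hall hA hB.
pose f s := (2 <= Bw s). pose g s := (Bw s == 1).
have pB : forall s, s <= K -> Bw s <= m.+1 * f s + g s.
  move=> s hs; rewrite /f /g Bw_E; case: leqP; case: eqP; rewrite /K in hs; lia.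
have pA : forall s, s <= K -> (k + l) * f s + k * g s <= Aw s.
  move=> s hs; rewrite /f /g Aw_E Bw_E; case: leqP; case: eqP; rewrite /K in hs; lia.
have sF : \sum_(s <- L) (m.+1 * f s + g s) = m.+1 * count f L + count g L.
  by rewrite big_split /= -big_distrr /= !sum_count.
have sF2 : \sum_(s <- L) ((k + l) * f s + k * g s) = (k + l) * count f L + k * count g L.
  by rewrite big_split /= -!big_distrr /= !sum_count.
have leB : \sum_(s <- L) Bw s <= \sum_(s <- L) (m.+1 * f s + g s).
  rewrite big_seq_cond [X in _ <= X]big_seq_cond; apply: leq_sum => i /andP [hi _].
  by apply: pB; apply: (allP hall).
have leA : \sum_(s <- L) ((k + l) * f s + k * g s) <= \sum_(s <- L) Aw s.
  rewrite big_seq_cond [X in _ <= X]big_seq_cond; apply: leq_sum => i /andP [hi _].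
  by apply: pA; apply: (allP hall).
have [eF eC] : count f L = T.+1 /\ count g L = 1.
  apply: rigid_arith; [rewrite -hB -sF // | rewrite -sF2 -hA //].
have EB' : forall s, s \in L -> Bw s = m.+1 * f s + g s.
  apply: sum_eq_le; first by move=> s hs; apply: pB; apply: (allP hall).
  rewrite hB sF eF eC; lia.
have EA' : forall s, s \in L -> (k + l) * f s + k * g s = Aw s.
  apply: sum_eq_le; first by move=> s hs; apply: pA; apply: (allP hall).
  rewrite hA sF2 eF eC; lia.
have key : forall s, s \in L -> [/\ (s == 0) || (s == k.+1) || (s == K),
      (s == K) = f s & (s == k.+1) = g s].
  move=> s hs; have e1 := EB' s hs; have e2 := EA' s hs; have h0 := allP hall s hs.
  rewrite /K in h0 *; move: e1 e2; rewrite /f /g /=.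
  case hf: (2 <= Bw s); case hg: (Bw s == 1) => /= e1 e2.
  - by move/eqP: hg => hg; rewrite hg in hf.
  - have hs' : s = k + l + m + 1 by rewrite ?Aw_E ?Bw_E in e1 e2; lia.
    rewrite hs'; split; try (by rewrite ?eqxx ?orbT); try (apply/eqP; lia);
      try (apply/negbTE; apply/eqP; lia).
  - have hs' : s = k.+1 by rewrite ?Aw_E ?Bw_E in e1 e2; lia.
    rewrite hs'; split; try (by rewrite ?eqxx ?orbT); try (apply/eqP; lia);
      try (apply/negbTE; apply/eqP; lia).
  - have hs' : s = 0 by rewrite ?Aw_E ?Bw_E in e1 e2; lia.
    rewrite hs'; split; try (by rewrite ?eqxx ?orbT); try (apply/eqP; lia);
      try (apply/negbTE; apply/eqP; lia).
split.
- by apply/allP => s hs; case: (key s hs).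
- rewrite -eF; apply: eq_in_count => s hs; by case: (key s hs).
- rewrite -eC; apply: eq_in_count => s hs; by case: (key s hs).
Qed.




Notation Ac x := (count_mem la x).
Notation Bc x := (count_mem lb x).

Definition PP c (x : word) := forall r, 0 < r -> r <= size x ->
  (k + l) * Bc (take r x) < c + m.+1 * Ac (take r x).
Definition PPs c (x : word) := forall r, 0 < r -> r < size x ->
  (k + l) * Bc (take r x) < c + m.+1 * Ac (take r x).
Definition EE c (x : word) c' := c' + (k + l) * Bc x = c + m.+1 * Ac x.

Lemma PP_cat c x y c' : PP c x -> EE c x c' -> PP c' y -> PP c (x ++ y).
Proof.
move=> h1 h2 h3 r r0 hr; rewrite take_cat; case: (ltnP r (size x)) => hx.
  by apply: (h1 r r0); lia.
rewrite size_cat in hr.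
have [e|hpos] := eqVneq (r - size x) 0.
  have e2 : r = size x by lia.
  have h := h1 _ r0 (eq_leq e2); rewrite e2 take_size in h.
  by rewrite e take0 cats0.
have := h3 (r - size x) _ _; rewrite /EE in h2.
rewrite !count_cat !mulnDr; move: h2; rewrite lt0n hpos; lia.
Qed.

Lemma PPs_cat c x y c' : PP c x -> EE c x c' -> PPs c' y -> PPs c (x ++ y).
Proof.
move=> h1 h2 h3 r r0 hr; rewrite take_cat; case: (ltnP r (size x)) => hx.
  by apply: (h1 r r0); lia.
rewrite size_cat in hr.
have [e|hpos] := eqVneq (r - size x) 0.
  have e2 : r = size x by lia.
  have h := h1 _ r0 (eq_leq e2); rewrite e2 take_size in h.
  by rewrite e take0 cats0.
have := h3 (r - size x) _ _; rewrite /EE in h2.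
rewrite !count_cat !mulnDr; move: h2; rewrite lt0n hpos; lia.
Qed.

Lemma EE_cat c x y c' c'' : EE c x c' -> EE c' y c'' -> EE c (x ++ y) c''.
Proof. rewrite /EE count_cat count_cat !mulnDr; lia. Qed.

Lemma take_nseq' (T : Type) r n (d : T) : take r (nseq n d) = nseq (minn r n) d.
Proof. elim: n r => [|n IH] [|r] //=; by rewrite ?minn0 // IH minnSS. Qed.

Lemma PP_a c n : PP c (nseq n la).
Proof.
move=> r r0 hr; rewrite take_nseq' !count_nseq /=; rewrite size_nseq in hr; lia.
Qed.

Lemma EE_a c n : EE c (nseq n la) (c + m.+1 * n).
Proof. rewrite /EE !count_nseq /=; lia. Qed.

Lemma PP_b c n : (k + l) * n < c -> PP c (nseq n lb).
Proof.
move=> h r r0 hr; rewrite take_nseq' !count_nseq /=; rewrite size_nseq in hr.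
have : (k + l) * minn r n <= (k + l) * n by rewrite leq_mul2l geq_minr orbT.
lia.
Qed.

Lemma PPs_b c n : (k + l) * n.-1 < c -> PPs c (nseq n lb).
Proof.
move=> h r r0 hr; rewrite take_nseq' !count_nseq /=; rewrite size_nseq in hr.
have : (k + l) * minn r n <= (k + l) * n.-1 by rewrite leq_mul2l; apply/orP; right; lia.
lia.
Qed.

Lemma EE_b c n : (k + l) * n <= c -> EE c (nseq n lb) (c - (k + l) * n).
Proof. rewrite /EE !count_nseq /=; lia. Qed.

Definition X : word := pw la k ++ pw lb m.+1 ++ pw la l.

Lemma PP_X c : m.+1 * l < c -> PP c X /\ EE c X c.
Proof.
move=> h; rewrite /X /pw; split.
- apply: (PP_cat (@PP_a c k) (@EE_a c k)).
  apply: (PP_cat (@PP_b _ m.+1 _) (@EE_b _ m.+1 _)); try lia.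
  exact: PP_a.
- apply: (EE_cat (@EE_a c k)).
  apply: (EE_cat (@EE_b _ m.+1 _)); first lia.
  rewrite /EE !count_nseq /=; lia.
Qed.

Lemma PP_Xs c i : m.+1 * l < c -> PP c (flatten (nseq i X)) /\ EE c (flatten (nseq i X)) c.
Proof.
move=> h; elim: i => [|i [IH1 IH2]] /=.
  by split => [r r0 hr|]; [rewrite /= in hr; lia | rewrite /EE /=; lia].
have [h1 h2] := PP_X h.
by split; [apply: (PP_cat h1 h2 IH1) | apply: (EE_cat h2 IH2)].
Qed.


Definition Sw n : word :=
    pw la k ++ [:: lb] ++ pw la l ++ pw la k ++ [:: lb] ++ pw la l ++ pw lb m
    ++ flatten (nseq n (pw la k ++ pw lb m.+1 ++ pw la l))
    ++ pw la k ++ [:: lb] ++ pw la l ++ pw lb m ++ pw lb m.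

Ltac stepA := match goal with |- PPs ?c (nseq ?n la ++ _) =>
  apply: (PPs_cat (@PP_a c n) (@EE_a c n)) end.
Ltac stepB := match goal with |- PPs ?c (nseq ?n lb ++ _) =>
  apply: (PPs_cat (@PP_b c n _) (@EE_b c n _)); try lia end.

Lemma P1 i : PPs 0 (Sw i).
Proof.
have hu : l < m * k by nia.
rewrite /Sw /pw; change [:: lb] with (nseq 1 lb).
stepA. stepB. stepA. stepA. stepB. stepA. stepB.
match goal with |- PPs ?c _ =>
  have hx : m.+1 * l < c; [lia|
  apply: (PPs_cat (proj1 (@PP_Xs c i hx)) (proj2 (@PP_Xs c i hx)))] end.
stepA. stepB. stepA. stepB.
apply: PPs_b. lia.
Qed.





Lemma Xs_counts n : [/\ Ac (flatten (nseq n X)) = n * (k + l),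
   Bc (flatten (nseq n X)) = n * m.+1 & size (flatten (nseq n X)) = n * (k + l + m.+1)].
Proof.
elim: n => [|n [h1 h2 h3]] //=.
rewrite !count_cat size_cat h1 h2 h3 /X /pw ?count_cat !size_cat !count_nseq !size_nseq /=.
split; lia.
Qed.

Lemma count_take_le c r (x : word) : count_mem c (take r x) <= count_mem c x.
Proof. by rewrite -{2}(cat_take_drop r x) count_cat leq_addr. Qed.

Lemma count_take_mono c r r' (x : word) : r <= r' ->
  count_mem c (take r x) <= count_mem c (take r' x).
Proof.
move=> h; rewrite -(take_takel x h). exact: count_take_le.
Qed.

Lemma Xs_take c r n : r >= size (flatten (nseq n X)) ->
  count_mem c (take r (flatten (nseq n X))) = count_mem c (flatten (nseq n X)).
Proof. by move=> h; rewrite take_oversize. Qed.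

Lemma Sw_counts n : Ac (Sw n) = n.+3 * (k + l) /\ Bc (Sw n) = n.+3 * m.+1.
Proof.
have [h1 h2 _] := Xs_counts n.
rewrite /Sw /pw !count_cat h1 h2 !count_nseq /=; split; lia.
Qed.

Ltac expand_take :=
  rewrite /Sw /pw; change [:: lb] with (nseq 1 lb);
  rewrite !count_take_cat !count_take_nseq ?size_cat ?size_nseq /=.

Definition Pw : word := pw la k ++ [:: lb] ++ pw la l ++ pw la k ++ [:: lb] ++ pw la l ++ pw lb m.
Definition Qw : word := pw la k ++ [:: lb] ++ pw la l ++ pw lb m ++ pw lb m.

Lemma Sw_PQ n : Sw n = Pw ++ flatten (nseq n X) ++ Qw.
Proof. by rewrite /Sw /Pw /Qw -!catA. Qed.

Lemma Pw_counts : [/\ Ac Pw = (k + l) * 2, Bc Pw = m.+2 & size Pw = k + 1 + l + k + 1 + l + m].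
Proof. rewrite /Pw /pw !count_cat !size_cat !count_nseq !size_nseq /=; split; lia. Qed.

Lemma P2 i r : Ac (take r (Sw i)) = (k + l) * 1 + k * 1 ->
  Bc (take r (Sw i)) = m.+1 * 1 + 1 -> False.
Proof.
have [pa pb ps] := Pw_counts.
rewrite Sw_PQ take_cat; case: (ltnP r (size Pw)) => hr.
  move: hr; rewrite ps; rewrite /Pw /pw; change [:: lb] with (nseq 1 lb).
  rewrite !count_take_cat !count_take_nseq ?size_cat ?size_nseq /=.
  lia.
rewrite count_cat pa; lia.
Qed.

Lemma P3 i r : Ac (take r (Sw i)) = (k + l) * i.+2 + k * 1 ->
  Bc (take r (Sw i)) = m.+1 * i.+2 + 1 -> False.
Proof.
have [pa pb ps] := Pw_counts.
have [h1 h2 h3] := Xs_counts i.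
rewrite Sw_PQ catA take_cat; case: (ltnP r (size (Pw ++ flatten (nseq i X)))) => hr.
  have := count_take_le la r (Pw ++ flatten (nseq i X)).
  have ea : Ac (Pw ++ flatten (nseq i X)) = (k + l) * 2 + i * (k + l) by rewrite count_cat pa h1.
  rewrite ea; lia.
have ea : Ac (Pw ++ flatten (nseq i X)) = (k + l) * 2 + i * (k + l) by rewrite count_cat pa h1.
have eb : Bc (Pw ++ flatten (nseq i X)) = m.+2 + i * m.+1 by rewrite count_cat pb h2.
rewrite count_cat ea count_cat eb.
rewrite /Qw /pw; change [:: lb] with (nseq 1 lb).
rewrite !count_take_cat !count_take_nseq ?size_cat ?size_nseq /=.
lia.
Qed.

Definition pre t : word := Pw ++ flatten (nseq t X) ++ pw la k ++ pw lb m.+1.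

Lemma flatten_nseqS t : flatten (nseq t.+1 X) = flatten (nseq t X) ++ X.
Proof. by rewrite -addn1 nseqD flatten_cat /= cats0. Qed.

Lemma pre_succ t : pre t.+1 = pre t ++ (pw la l ++ pw la k) ++ pw lb m.+1.
Proof. by rewrite /pre flatten_nseqS /X -!catA. Qed.

Lemma Sw_pre j t : t < j -> exists R, Sw j = pre t ++ R.
Proof.
move=> h; rewrite Sw_PQ /pre.
have -> : j = t.+1 + (j - t.+1) by lia.
rewrite nseqD flatten_cat flatten_nseqS /X.
by eexists; rewrite -!catA.
Qed.

Lemma pre_counts t : Ac (pre t) = t.+2 * (k + l) + k /\ Bc (pre t) = t.+2 * m.+1 + 1.
Proof.
have [pa pb _] := Pw_counts; have [h1 h2 _] := Xs_counts t.
rewrite /pre; split.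
- rewrite count_cat pa count_cat h1 /pw !count_cat !count_nseq /=; lia.
- rewrite count_cat pb count_cat h2 /pw !count_cat !count_nseq /=; lia.
Qed.



Lemma sum_AB L : all (fun s => (s == 0) || (s == k.+1) || (s == K)) L ->
  \sum_(s <- L) Aw s = (k + l) * count_mem K L + k * count_mem k.+1 L /\
  \sum_(s <- L) Bw s = m.+1 * count_mem K L + count_mem k.+1 L.
Proof.
elim: L => [|s L IH] /=; first by rewrite !big_nil !muln0.
move=> /andP [hs /IH [IH1 IH2]]; rewrite !big_cons IH1 IH2 Aw_E Bw_E /K.
move: hs; case: (s =P 0) => [->|_] /=.
  rewrite /K; split; lia.
case: (s =P k.+1) => [->|_] /=.
  rewrite /K; split; lia.
move=> /eqP ->; rewrite /K eqxx /=; split; lia.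
Qed.

Lemma Bw_mono s s' : s <= s' -> Bw s <= Bw s'.
Proof. rewrite !Bw_E; lia. Qed.

Lemma count_map_lt (f g : nat -> nat) (s : seq nat) v :
  count_mem v (map f s) < count_mem v (map g s) ->
  exists2 x, x \in s & g x = v /\ f x != v.
Proof.
elim: s => [|x s IH] //=.
case: (eqVneq (g x) v) => [eg|ng]; case: (eqVneq (f x) v) => [ef|nf] /=;
  rewrite ?add1n ?add0n ?ltnS => h.
- by have [y hy hy2] := IH h; exists y => //; rewrite inE hy orbT.
- by exists x; rewrite ?inE ?eqxx.
- have [y hy hy2] := IH (ltnW h). by exists y => //; rewrite inE hy orbT.
- by have [y hy hy2] := IH h; exists y => //; rewrite inE hy orbT.
Qed.

Section Main.
Variables i j d N1 : nat.
Variables zl zl1 : seq (bool * nat).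
Hypotheses (hi : 1 <= i) (hij : i < j).
Hypothesis HL : Lab (Sw j) zl ([:: Sw i] ++ nseq d w).
Hypothesis HL1 : Lab (Sw i) zl1 ([::] ++ nseq N1 w).

Definition beta t := size (pre t).
Definition alpha t := st zl 0 (beta t).
Definition L1 t := [seq st zl1 y (alpha t) | y <- iota 0 N1].
Definition L2 t := [seq st zl x (beta t) | x <- iota 1 d].
Definition U1 t := count_mem K (L1 t).
Definition E1 t := count_mem k.+1 (L1 t).
Definition U2 t := count_mem K (L2 t).
Definition E2 t := count_mem k.+1 (L2 t).

Lemma take_pre t : t < j -> take (beta t) (Sw j) = pre t.
Proof. by move=> h; have [R ->] := Sw_pre h; rewrite /beta take_size_cat. Qed.

Lemma sum_L1 c t : count_mem c (take (alpha t) (Sw i)) =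
  \sum_(y <- iota 0 N1) count_mem c (take (st zl1 y (alpha t)) w).
Proof.
rewrite (Lab_cut c (alpha t) HL1) /= size_nseq.
apply: eq_big_seq => y; rewrite mem_iota /= => hy. by rewrite nth_nseq hy.
Qed.

Lemma sum_cut c t : t < j -> count_mem c (pre t) =
  count_mem c (take (alpha t) (Sw i)) +
  \sum_(x <- iota 1 d) count_mem c (take (st zl x (beta t)) w).
Proof.
move=> h; rewrite -take_pre // (Lab_cut c (beta t) HL) /= size_nseq.
rewrite big_cons /=; congr (_ + _).
apply: eq_big_seq => x; rewrite mem_iota => /andP [h1 h2].
case: x h1 h2 => [|x] //= _ hx. by rewrite nth_nseq; have -> : x < d by lia.
Qed.

Lemma states_le t : all (fun s => s <= K) (L1 t ++ L2 t).
Proof.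
rewrite all_cat; apply/andP; split; apply/allP => s /mapP [y]; rewrite mem_iota => hy ->.
- have := st_le y (alpha t) HL1. rewrite /= nth_nseq. case: ifP; rewrite ?size_w //; lia.
- have := st_le y (beta t) HL. rewrite /=.
  case: y hy => [|y] //= hy; rewrite nth_nseq; case: ifP; rewrite ?size_w //; lia.
Qed.

Lemma rigid_t t : t < j ->
  [/\ all (fun s => (s == 0) || (s == k.+1) || (s == K)) (L1 t ++ L2 t),
      U1 t + U2 t = t.+2 & E1 t + E2 t = 1].
Proof.
move=> ht.
have [pa pb] := pre_counts t.
have hA : \sum_(s <- L1 t ++ L2 t) Aw s = t.+2 * (k + l) + k.
  by rewrite big_cat /= !big_map -pa (sum_cut la ht) sum_L1.
have hB : \sum_(s <- L1 t ++ L2 t) Bw s = t.+2 * m.+1 + 1.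
  by rewrite big_cat /= !big_map -pb (sum_cut lb ht) sum_L1.
have [h1 h2 h3] := rigid (states_le t) hA hB.
by split => //; rewrite /U1 /U2 /E1 /E2 -count_cat.
Qed.

Lemma B1_eq t : t < j -> count_mem lb (take (alpha t) (Sw i)) = m.+1 * U1 t + E1 t
   /\ count_mem la (take (alpha t) (Sw i)) = (k + l) * U1 t + k * E1 t.
Proof.
move=> ht; have [h _ _] := rigid_t ht; rewrite all_cat in h; case/andP: h => h1 _.
have [s1 s2] := sum_AB h1.
by rewrite !sum_L1 -s1 -s2 /L1 !big_map.
Qed.

Lemma B2_eq t : t < j -> \sum_(s <- L2 t) Bw s = m.+1 * U2 t + E2 t.
Proof.
move=> ht; have [h _ _] := rigid_t ht; rewrite all_cat in h; case/andP: h => _ h2.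
by have [_ s2] := sum_AB h2.
Qed.

Lemma beta_succ t : beta t.+1 = beta t + (l + k + m.+1).
Proof. by rewrite /beta pre_succ !size_cat /pw !size_nseq addnA. Qed.

Lemma incr t : t.+1 < j ->
  [/\ m.+1 * U1 t + E1 t <= m.+1 * U1 t.+1 + E1 t.+1,
      m.+1 * U2 t + E2 t <= m.+1 * U2 t.+1 + E2 t.+1 &
      m.+1 * U1 t.+1 + E1 t.+1 + (m.+1 * U2 t.+1 + E2 t.+1) =
      m.+1 * U1 t + E1 t + (m.+1 * U2 t + E2 t) + m.+1].
Proof.
move=> ht; have ht' : t < j by lia.
have [b1 _] := B1_eq ht'; have [b1' _] := B1_eq ht.
split.
- rewrite -b1 -b1'. apply: count_take_mono. apply: st_mono. rewrite beta_succ; lia.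
- rewrite -!B2_eq // /L2 !big_map. rewrite big_seq_cond [X in _ <= X]big_seq_cond.
  apply: leq_sum => x _. apply: Bw_mono. apply: st_mono. rewrite beta_succ; lia.
- have [_ pb] := pre_counts t; have [_ pb'] := pre_counts t.+1.
  rewrite -b1 -b1' -!B2_eq // /L2 !big_map -(sum_cut lb ht') -(sum_cut lb ht) pb pb'.
  lia.
Qed.

Lemma Sw_counts_i : count_mem lb (Sw i) = i.+3 * m.+1.
Proof. by have [_ ->] := Sw_counts i. Qed.

Lemma F4 t : t < j -> E1 t = 0 -> U1 t = 0 \/ U1 t = i.+3.
Proof.
move=> ht he; have [b a] := B1_eq ht; rewrite he addn0 muln0 in b a.
have hP1 := @P1 i.
case: (posnP (alpha t)) => [h0|hpos].
  by left; rewrite h0 take0 /= in a; nia.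
case: (ltnP (alpha t) (size (Sw i))) => hs.
  have := hP1 _ hpos hs; rewrite a b; nia.
right; rewrite take_oversize // in b. rewrite Sw_counts_i in b; nia.
Qed.

Lemma F5 t : t < j -> E1 t = 1 -> U1 t != 1.
Proof.
move=> ht he; apply/eqP => hu; have [b a] := B1_eq ht; rewrite he hu in b a.
exact: (P2 a b).
Qed.

Lemma F6 t : t < j -> E1 t = 1 -> U1 t <= i.+1.
Proof.
move=> ht he; have [b a] := B1_eq ht; rewrite he in b a.
have hle := count_take_le lb (alpha t) (Sw i); rewrite Sw_counts_i b in hle.
have : U1 t != i.+2 by apply/eqP => hu; rewrite hu in a b; exact: (P3 a b).
nia.
Qed.

Lemma U2_le t : U2 t <= d.
Proof. by rewrite /U2 /L2; apply: (leq_trans (count_size _ _)); rewrite size_map size_iota. Qed.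

Lemma d_val : d = j - i.
Proof.
case: HL => h1 h2 h3.
have := count_sum lb h2; rewrite h1 /= size_nseq.
rewrite big_cons h3 /=.
have -> : \sum_(x <- iota 1 d) count_mem lb (projl x zl) = \sum_(x <- iota 1 d) m.+1.
  apply: eq_big_seq => x; rewrite mem_iota => /andP [hx1 hx2].
  rewrite h3 /=; case: x hx1 hx2 => [|x] //= _ hx; rewrite nth_nseq.
  have -> : x < d by lia.
  by rewrite /w /pw !count_cat !count_nseq /=; lia.
rewrite big_const_seq count_predT size_iota.
have [_ e1] := Sw_counts j; have [_ e2] := Sw_counts i.
rewrite e1 e2 iter_addn_0.
nia.
Qed.

Lemma nojump t : t.+1 < j -> E2 t = 0 -> E2 t.+1 = 0 -> U2 t.+1 <= U2 t.
Proof.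
move=> ht he he'; rewrite leqNgt; apply/negP => hlt.
have ht' : t < j by lia.
have [x hx [hK hn]] := count_map_lt hlt.
have [hall _ _] := rigid_t ht'.
have hmem : st zl x (beta t) \in L2 t by apply: map_f.
have hx0 : st zl x (beta t) = 0.
  have hin : st zl x (beta t) \in L1 t ++ L2 t by rewrite mem_cat hmem orbT.
  have := allP hall _ hin.
  rewrite (negbTE hn) orbF.
  have : k.+1 \notin L2 t by rewrite -has_pred1 has_count /E2 in he *; rewrite he.
  case: (st zl x (beta t) =P 0) => //= _ hn2 /eqP hk. by rewrite -hk hmem in hn2.
have hnth : nth [::] ([:: Sw i] ++ nseq d w) x = w.
  move: hx; rewrite mem_iota => /andP [hx1 hx2].
  case: x {hK hn hmem hx0} hx1 hx2 => [|x] //= _ hx; rewrite nth_nseq.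
  by have -> : x < d by lia.
have [R hR] := Sw_pre ht.
have hR1 : Sw j = pre t ++ (pw la l ++ pw la k) ++ (pw lb m.+1 ++ R)
  by rewrite hR pre_succ -!catA.
have hR2 : Sw j = (pre t ++ (pw la l ++ pw la k)) ++ pw lb m.+1 ++ R
  by rewrite hR pre_succ -!catA.
pose mid := size (pre t) + size (pw la l ++ pw la k).
have w1 : Bw (st zl x mid) <= Bw (st zl x (beta t)) + 0.
  have := Lab_window x lb HL hR1. rewrite !(Lab_st x _ HL) hnth.
  suff -> : count_mem lb (pw la l ++ pw la k) = 0 by [].
  by rewrite /pw count_cat !count_nseq.
have w2 : Aw (st zl x (beta t.+1)) <= Aw (st zl x mid) + 0.
  have := Lab_window x la HL hR2. rewrite !(Lab_st x _ HL) hnth.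
  have -> : count_mem la (pw lb m.+1) = 0 by rewrite /pw !count_nseq.
  have -> : size (pre t ++ (pw la l ++ pw la k)) = mid by rewrite size_cat.
  suff -> : mid + size (pw lb m.+1) = beta t.+1 by [].
  by rewrite beta_succ /mid /beta /pw !size_cat !size_nseq; lia.
rewrite hx0 hK in w1 w2.
move: w1 w2; set s := st zl x mid.
rewrite !Aw_E !Bw_E /K; lia.
Qed.

Lemma step_bounds t : t.+1 < j ->
  [/\ U1 t <= U1 t.+1, U1 t.+1 <= (U1 t).+1 & U2 t <= U2 t.+1].
Proof.
move=> ht; have ht' : t < j by lia.
have [_ _ e] := rigid_t ht'; have [_ _ e'] := rigid_t ht.
have [h1 h2 h3] := incr ht.
move: h1 h2 h3 e e'.
move: (U1 t) (U1 t.+1) (U2 t) (U2 t.+1) (E1 t) (E1 t.+1) (E2 t) (E2 t.+1).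
move=> a a' b b' x x' y y' h1 h2 h3 e e'.
have ha : a <= a' by nia.
have hb : b <= b' by nia.
split => //; nia.
Qed.

Lemma inv t : t < j -> U1 t != 1 /\ U1 t <= i.+1.
Proof.
elim: t => [|t IH] ht.
- have [_ hu he] := rigid_t ht.
  have hE : E1 0 = 0 \/ E1 0 = 1 by lia.
  case: hE => hE.
  + have := F4 ht hE; lia.
  + have := F5 ht hE; lia.
- have ht' : t < j by lia.
  have [IH1 IH2] := IH ht'.
  have [_ hs _] := step_bounds ht.
  have [_ _ he] := rigid_t ht.
  have hE : E1 t.+1 = 0 \/ E1 t.+1 = 1 by lia.
  case: hE => hE.
  + have := F4 ht hE; lia.
  + have := F5 ht hE; have := F6 ht hE; lia.
Qed.

Lemma contra : False.
Proof.
have hj0 : 0 < j by lia.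
have [i0 i0'] := inv hj0.
have [_ hu0 _] := rigid_t hj0.
have hd := d_val.
have [hz|hpos] : U1 0 = 0 \/ 2 <= U1 0 by lia.
- have all0 : forall t, t < j -> U1 t = 0.
    elim=> [//|t IH] ht.
    have [_ hs _] := step_bounds ht.
    have [i1 _] := inv ht. rewrite IH in hs; [lia | lia].
  have hlast : j.-1 < j by lia.
  have [_ hu _] := rigid_t hlast.
  have := U2_le j.-1. rewrite all0 // in hu. lia.
- have all2 : forall t, t < j -> 2 <= U1 t.
    elim=> [//|t IH] ht.
    have [hs _ _] := step_bounds ht. have := IH (ltnW ht). lia.
  have hE2 : forall t, t < j -> E2 t = 0.
    move=> t ht; have [_ _ he] := rigid_t ht.
    have [_ hi1] := inv ht; have h2 := all2 t ht.
    have : E1 t = 1.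
      have hE : E1 t = 0 \/ E1 t = 1 by lia.
      case: hE => // hE. have := F4 ht hE. lia.
    lia.
  have U20 : U2 0 = 0 by lia.
  have all0 : forall t, t < j -> U2 t = 0.
    elim=> [//|t IH] ht.
    have := nojump ht (hE2 t (ltnW ht)) (hE2 t.+1 ht).
    rewrite IH; [lia | exact: ltnW].
  have hlast : j.-1 < j by lia.
  have [_ hu _] := rigid_t hlast.
  have [_ hi1] := inv hlast.
  rewrite all0 // in hu. lia.
Qed.

End Main.

End Params.
Lemma step_two (wd u1 u2 w1 w2 : word) : wd = w1 ++ w2 ->
  step (fun u => u = wd) (u1 ++ u2) (u1 ++ w1 ++ u2 ++ w2).
Proof.
move=> ->; exists (w1 ++ w2); split => //.
exists [:: u1; u2], [:: w1; w2]; split => //=; rewrite ?cats0 //.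
by rewrite -!catA.
Qed.

Lemma Lab_nil : Lab [::] [::] [::].
Proof. by split => // x; rewrite nth_nil. Qed.

Lemma Lab_single (u : word) : Lab u [seq (c, 0) | c <- u] [:: u].
Proof.
split.
- by rewrite -map_comp map_id.
- by apply/allP => p /mapP [c _ ->].
- move=> x; rewrite /projl.
  case: x => [|x] /=.
  + by elim: u => [|c u IH] //=; rewrite IH.
  + by elim: u => [|c u IH] //=; rewrite nth_nil.
Qed.

Section Part1.
Variables k l m : nat.

Definition Yw n : word := pw la k ++ [:: lb] ++ pw la l ++ flatten (nseq n (X k l m)) ++ pw lb m.

Lemma Y_der n : derives (fun u => u = w k l m) [::] (Yw n).
Proof.
elim: n => [|n IH].
- apply: rtc_step (rtc_refl _ _).
  have := @step_two (w k l m) [::] [::] (w k l m) [::] (esym (cats0 _)).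
  by rewrite /= cats0.
- apply: rtc_snoc IH _.
  have hw : w k l m = (pw la k ++ [:: lb]) ++ (pw la l ++ pw lb m) by rewrite /w -!catA.
  have hs := @step_two _ (pw la k ++ [:: lb] ++ pw la l ++ flatten (nseq n (X k l m)))
     (pw lb m) _ _ hw.
  have e1 : Yw n = (pw la k ++ [:: lb] ++ pw la l ++ flatten (nseq n (X k l m))) ++ pw lb m.
    by rewrite /Yw -!catA.
  have e2 : Yw n.+1 = (pw la k ++ [:: lb] ++ pw la l ++ flatten (nseq n (X k l m))) ++
      (pw la k ++ [:: lb]) ++ pw lb m ++ (pw la l ++ pw lb m).
    by rewrite /Yw flatten_nseqS /X /pw -!catA.
  by rewrite e1 e2.
Qed.

Lemma S_der n : derives (fun u => u = w k l m) [::] (Sw k l m n).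
Proof.
have hw : w k l m = w k l m ++ [::] by rewrite cats0.
pose A := pw la k ++ [:: lb] ++ pw la l.
pose B := flatten (nseq n (X k l m)).
have s1 := @step_two _ (A ++ B) (pw lb m) _ _ hw.
have s2 := @step_two _ A (B ++ w k l m ++ pw lb m) _ _ hw.
have e1 : Yw n = (A ++ B) ++ pw lb m by rewrite /Yw /A /B -!catA.
have e2 : (A ++ B) ++ w k l m ++ pw lb m ++ [::] = A ++ (B ++ w k l m ++ pw lb m)
  by rewrite cats0 -!catA.
have e3 : Sw k l m n = A ++ w k l m ++ (B ++ w k l m ++ pw lb m) ++ [::]
  by rewrite cats0 /Sw /A /B /w /X -!catA.
rewrite -e1 e2 in s1. rewrite -e3 in s2.
exact: rtc_snoc (rtc_snoc (Y_der n) s1) s2.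
Qed.

End Part1.

Theorem proposition3 (k l m : nat) (hkl : l < k) (hl : 1 <= l) (hm : 1 <= m) :
  let w : word := pw la k ++ [:: lb] ++ pw la l ++ pw lb m in
  let I := fun u : word => u = w in
  let S := fun n : nat =>
    pw la k ++ [:: lb] ++ pw la l ++ pw la k ++ [:: lb] ++ pw la l ++ pw lb m
    ++ flatten (nseq n (pw la k ++ pw lb m.+1 ++ pw la l))
    ++ pw la k ++ [:: lb] ++ pw la l ++ pw lb m ++ pw lb m in
  (forall n, 1 <= n -> Leps I (S n)) /\
  (forall i j, 1 <= i -> i < j -> ~ derives I (S i) (S j)) /\
  ~ wqo_on (Leps I) (derives I).
Proof.
move=> w0 I S.
have part1 : forall n, Leps I (S n) := fun n => S_der k l m n.
have part2 : forall i j, 1 <= i -> i < j -> ~ derives I (S i) (S j).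
  move=> i j hi hij hd.
  have [d1 [zl1 H1]] := derives_lab (part1 i) Lab_nil.
  have [d [zl H]] := derives_lab hd (Lab_single (S i)).
  exact: (contra hkl hl hm hi hij H H1).
split; first by move=> n _; exact: part1.
split; first exact: part2.
move=> H.
have [i [j [hij hd]]] := H (fun n => S n.+1) (fun n => part1 n.+1).
exact: (part2 i.+1 j.+1 isT hij hd).
Qed.
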